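(* For each $s\ge0$, $\big(\mathrm{ad}(\Omega_0)+\mu(\Omega')\big)^s(\mathbf 1\otimes\mathbf I)$ belongs to $\mathcal B^0\otimes\mathcal U(\mathfrak X)$.
   Context: $\mathfrak X$ is the complex Lie algebra generated by $Z_1,Z_{11},Z_2,Z_{22},Z_{12}$ subject only to $[Z_1,Z_2]=[Z_{11},Z_2]=[Z_1,Z_{22}]=0$ and $[Z_{11},Z_{22}]=-[Z_{11},Z_{12}]=[Z_{22},Z_{12}]=-[Z_1-Z_2,Z_{12}]$; $\mathcal U(\mathfrak X)$ its universal enveloping algebra with unit $\mathbf I$. On $\mathbf P^1\times\mathbf P^1$: $\zeta_i=dz_i/z_i$, $\zeta_{ii}=dz_i/(1-z_i)$ ($i=1,2$), $\zeta_{12}=d(z_1z_2)/(1-z_1z_2)$. $S(A)$, $A=\{\zeta_1,\zeta_{11},\zeta_2,\zeta_{22},\zeta_{12}\}$, is the space with basis the words in $A$ (empty word $\mathbf 1$), with concatenation $\circ$. An element $\sum_Ic_I\omega_{i_1}\circ\cdots\circ\omega_{i_s}\in S_s(A)$ satisfies Chen's integrability condition if for each $1\le l<s$, $\sum_Ic_I\omega_{i_1}\otimes\cdots\otimes(\omega_{i_l}\wedge\omega_{i_{l+1}})\otimes\cdots\otimes\omega_{i_s}=0$ as a multiple differential form; $\mathcal B$ is the span of homogeneous elements satisfying this, and $\mathcal B^0$ the subspace of elements none of whose words ends in $\zeta_1$ or $\zeta_2$. On $S(A)\otimes\mathcal U(\mathfrak X)$: $\mathrm{ad}(\omega\otimes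 X)(\varphi\otimes F)=(\omega\circ\varphi)\otimes[X,F]$, $\mu(\omega\otimes X)(\varphi\otimes F)=(\omega\circ\varphi)\otimes XF$ (letters $\omega$, $X\in\mathfrak X$), extended linearly; $\Omega_0=\zeta_1\otimes Z_1+\zeta_2\otimes Z_2$, $\Omega'=\zeta_{11}\otimes Z_{11}+\zeta_{22}\otimes Z_{22}+\zeta_{12}\otimes Z_{12}$. *)

(* Defs.v *)
(* C = R[i] with R : realType (i.e. the complex numbers);
   U(X) is realised as the free associative C-algebra on the five generators
   (multinomials' monoid algebra over the free monoid {fmonom letter})
   modulo the two-sided ideal generated by the defining Lie relations. *)
From HB Require Import structures.
From mathcomp Require Import all_boot all_order all_algebra.
From mathcomp Require Import reals.
From mathcomp.real_closed Require Import complex.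
From mathcomp.multinomials Require Import monalg.

Set Implicit Arguments.
Unset Strict Implicit.
Unset Printing Implicit Defensive.

Import GRing.Theory Num.Theory.
Local Open Scope ring_scope.

(* The five letters: used both for the 1-forms zeta_1, zeta_11, zeta_2,
   zeta_22, zeta_12 (alphabet A) and for the generators Z_1, Z_11, Z_2,
   Z_22, Z_12 of the Lie algebra X. *)
Inductive letter := L1 | L11 | L2 | L22 | L12.

Definition letter_code (a : letter) : 'I_5 :=
  match a with
  | L1 => inord 0 | L11 => inord 1 | L2 => inord 2 | L22 => inord 3
  | L12 => inord 4
  end.

Definition letter_decode (i : 'I_5) : letter :=
  match val i with
  | 0 => L1 | 1 => L11 | 2 => L2 | 3 => L22 | _ => L12
  end.

Lemma letter_codeK : cancel letter_code letter_decode.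
Proof. by case; rewrite /letter_decode /= inordK. Qed.

HB.instance Definition _ := Finite.copy letter (can_type letter_codeK).

(* words in A (basis of S(A)); the empty word is the unit 1 *)
Definition word := seq letter.

Section Defs.
Variable R : realType.
Local Notation C := R[i].

(* A point of the affine chart of P^1 x P^1 is a
   pair z = (z1, z2); a 1-form is given by its dz1- and dz2-coefficients,
   a 2-form by its dz1/\dz2-coefficient.  Udom is the open set where all
   the forms zeta are regular. *)
Definition Udom (z : C * C) : Prop :=
  [/\ z.1 != 0, z.1 != 1, z.2 != 0, z.2 != 1 & z.1 * z.2 != 1].

Definition coef1 (a : letter) (z : C * C) : C :=
  match a with
  | L1 => 1 / z.1
  | L11 => 1 / (1 - z.1)
  | L2 => 0
  | L22 => 0
  | L12 => z.2 / (1 - z.1 * z.2)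
  end.

Definition coef2 (a : letter) (z : C * C) : C :=
  match a with
  | L1 => 0
  | L11 => 0
  | L2 => 1 / z.2
  | L22 => 1 / (1 - z.2)
  | L12 => z.1 / (1 - z.1 * z.2)
  end.

Definition comp (a : letter) (e : bool) (z : C * C) : C :=
  if e then coef1 a z else coef2 a z.

Definition wedge (a b : letter) (z : C * C) : C :=
  coef1 a z * coef2 b z - coef2 a z * coef1 b z.

(* The multiple differential form
     w_1 (x) ... (x) (w_{j+1} /\ w_{j+2}) (x) ... (x) w_s
   (0-based j, i.e. l = j+1 in the paper) attached to the word w of length s,
   realised as the external tensor product on the (s-1)-fold product:
   its coefficient at points x_0, ..., x_{s-2} and component choices e_k
   (for the 1-form slots) is the product of the slot coefficients. *)
Definition mfactor (w : word) (j k : nat) (x : nat -> C * C) (e : nat -> bool)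
  : C :=
  if (k < j)%N then comp (nth L1 w k) (e k) (x k)
  else if k == j then wedge (nth L1 w j) (nth L1 w j.+1) (x k)
  else comp (nth L1 w k.+1) (e k) (x k).

Definition mform (s : nat) (w : word) (j : nat) (x : nat -> C * C)
  (e : nat -> bool) : C :=
  \prod_(k < s.-1) mfactor w j k x e.

(* Elements of S(A): coefficient functions on words (with finite support). *)
Definition homog (s : nat) (v : word -> C) : Prop :=
  forall w, v w != 0 -> size w = s.

Definition chen (s : nat) (v : word -> C) : Prop :=
  forall j : nat, (j.+1 < s)%N ->
  forall (x : nat -> C * C) (e : nat -> bool), (forall k, Udom (x k)) ->
  \sum_(t : s.-tuple letter) v t * mform s t j x e = 0.

Definition inB (v : word -> C) : Prop :=
  exists (n : nat) (deg : 'I_n -> nat) (c : 'I_n -> word -> C),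
    (forall i, homog (deg i) (c i) /\ chen (deg i) (c i)) /\
    (forall w, v w = \sum_(i < n) c i w).

Definition ends_in_zeta1_or_zeta2 (w : word) : bool :=
  if w is a :: w' then (last a w' == L1) || (last a w' == L2) else false.

Definition inB0 (v : word -> C) : Prop :=
  inB v /\ forall w, v w != 0 -> ~~ ends_in_zeta1_or_zeta2 w.

(* The free associative algebra C<Z_1, Z_11, Z_2, Z_22, Z_12> = U(free Lie) *)
Definition FA := {malg C[{fmonom letter}]}.

Definition Zg (a : letter) : FA := << fmu a >>.

Definition comm (x y : FA) : FA := x * y - y * x.

Definition lie_rels : seq FA :=
  [:: comm (Zg L1) (Zg L2);
      comm (Zg L11) (Zg L2);
      comm (Zg L1) (Zg L22);
      comm (Zg L11) (Zg L22) + comm (Zg L1 - Zg L2) (Zg L12);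
      comm (Zg L11) (Zg L12) - comm (Zg L1 - Zg L2) (Zg L12);
      comm (Zg L22) (Zg L12) + comm (Zg L1 - Zg L2) (Zg L12)].

Definition in_rel_ideal (x : FA) : Prop :=
  exists (n : nat) (a b : 'I_n -> FA) (r : 'I_n -> 'I_(size lie_rels)),
    x = \sum_(i < n) a i * nth 0 lie_rels (r i) * b i.

(* equality in U(X) = FA / ideal, on representatives *)
Definition ueq (x y : FA) : Prop := in_rel_ideal (x - y).

(* Elements of S(A) (x) U(X) are represented as (finitely supported)
   functions word -> U(X), the image of  w (x) F  being  w |-> F,
   with U(X)-values given by representatives in FA. *)
Definition tens := word -> FA.

Definition one_tens : tens := fun w => if w is [::] then 1 else 0.

Definition Dop (f : tens) : tens := fun w =>
  match w with
  | [::] => 0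
  | a :: w' =>
      match a with
      | L1 => comm (Zg L1) (f w')
      | L2 => comm (Zg L2) (f w')
      | _ => Zg a * f w'
      end
  end.

Definition in_B0_tens (g : tens) : Prop :=
  exists (n : nat) (v : 'I_n -> word -> C) (u : 'I_n -> FA),
    (forall i, inB0 (v i)) /\
    (forall w, ueq (g w) (\sum_(i < n) v i w *: u i)).

End Defs.

(* Main.v *)
Require Import Defs.
From HB Require Import structures.
From mathcomp Require Import all_boot all_order all_algebra.
From mathcomp Require Import reals.
From mathcomp.real_closed Require Import complex.
From mathcomp.multinomials Require Import monalg.
From mathcomp Require Import ring.
From Stdlib Require Import Classical.
Set Implicit Arguments.
Unset Strict Implicit.
Unset Printing Implicit Defensive.
Import GRing.Theory Num.Theory.
Local Open Scope ring_scope.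

Section Gen.
Variable A : pzRingType.
Definition cm (x y : A) := x * y - y * x.
Lemma cmA x y : cm x y = - cm y x. Proof. by rewrite /cm opprB. Qed.
Lemma cmxx x : cm x x = 0. Proof. by rewrite /cm subrr. Qed.
Lemma cmBl x y z : cm (x - y) z = cm x z - cm y z.
Proof.
rewrite /cm mulrBl mulrBr !opprB addrACA [RHS]addrACA; congr (_ + _).
exact: addrC.
Qed.
Lemma L_LL x y z : x * (y * z) - y * (x * z) = cm x y * z.
Proof. by rewrite /cm mulrBl !mulrA. Qed.
Lemma L_adL x y z : cm x (y * z) - y * cm x z = cm x y * z.
Proof. by rewrite /cm mulrBr mulrBl !mulrA opprB subrKA. Qed.
Lemma L_Lad x y z : y * cm x z - cm x (y * z) = cm y x * z.
Proof. by have h := L_adL x y z; rewrite [cm y x]cmA mulNr -h [RHS]opprB. Qed.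
Lemma L_adad x y z : cm x (cm y z) - cm y (cm x z) = cm (cm x y) z.
Proof.
rewrite /cm !mulrBr !mulrBl !mulrA !opprB !addrA.
set a := x*y*z; set b := x*z*y; set c := y*z*x; set d := z*y*x.
set e := y*x*z; set h := z*x*y.
rewrite [a - b + d - c + b]addrAC [a - b + d + b]addrAC subrK.
rewrite [a + d - c - h]addrAC subrK.
by rewrite [a - e + d]addrAC addrAC.
Qed.
Lemma L_adad' x y z : cm x (cm y z) - cm y (cm x z) = cm x y * z - z * cm x y.
Proof. exact: L_adad. Qed.
Lemma L_adL' x y z : cm x (y * z) - y * cm x z = cm x y * z - 0.
Proof. by rewrite subr0 L_adL. Qed.
Lemma L_Lad' x y z : y * cm x z - cm x (y * z) = cm y x * z - 0.
Proof. by rewrite subr0 L_Lad. Qed.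
Lemma L_LL' x y z : x * (y * z) - y * (x * z) = cm x y * z - 0.
Proof. by rewrite subr0 L_LL. Qed.
End Gen.

Section GenL.
Variables (K : pzRingType) (V : lmodType K) (P : V -> Prop).
Lemma G00 (x t q : V) : P x -> P (x - (0:K) *: t - (0:K) *: q).
Proof. by rewrite !scale0r !subr0. Qed.
Lemma GN0 (x t q : V) : P (x + t) -> P (x - (-1:K) *: t - (0:K) *: q).
Proof. by rewrite scale0r subr0 scaleN1r opprK. Qed.
Lemma G10 (x t q : V) : P (x - t) -> P (x - (1:K) *: t - (0:K) *: q).
Proof. by rewrite scale0r subr0 scale1r. Qed.
Lemma G01 (x t q : V) : P 0 -> x = q -> P (x - (0:K) *: t - (1:K) *: q).
Proof. by move=> h ->; rewrite scale0r subr0 scale1r subrr. Qed.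
Lemma G0N (x t q : V) : P 0 -> x = - q -> P (x - (0:K) *: t - (-1:K) *: q).
Proof. by move=> h ->; rewrite scale0r subr0 scaleN1r opprK addrC subrr. Qed.
Lemma G11 (x t q : V) : P 0 -> x = t + q -> P (x - (1:K) *: t - (1:K) *: q).
Proof. by move=> h ->; rewrite !scale1r -addrA -opprD subrr. Qed.
Lemma GNN (x t q : V) : P 0 -> x = - (t + q) -> P (x - (-1:K) *: t - (-1:K) *: q).
Proof. by move=> h ->; rewrite !scaleN1r !opprK -addrA addNr. Qed.
End GenL.

Section GenS.
Variables (K : numFieldType) (V : lmodType K).
Lemma decomp (c t q : V) (al be : K) : c = (c - al *: t - be *: q) + be *: q + al *: t.
Proof. by rewrite subrK subrK. Qed.

Lemma sum_decomp (F r : letter -> letter -> V) (w al be : letter -> letter -> K) (t q : V) :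
  (forall a b, F a b = r a b + be a b *: q + al a b *: t) ->
  \sum_a \sum_b w a b * be a b = 0 -> \sum_a \sum_b w a b * al a b = 0 ->
  \sum_a \sum_b w a b *: F a b = \sum_a \sum_b w a b *: r a b.
Proof.
move=> E hb ha.
have -> : \sum_a \sum_b w a b *: F a b =
   \sum_a \sum_b w a b *: r a b + (\sum_a \sum_b w a b * be a b) *: q
   + (\sum_a \sum_b w a b * al a b) *: t.
  rewrite !scaler_suml -!big_split; apply: eq_bigr => a _.
  rewrite !scaler_suml -!big_split; apply: eq_bigr => b _.
  by rewrite E !scalerDr !scalerA.
by rewrite hb ha !scale0r !addr0.
Qed.

Lemma sym_sum (w : letter -> letter -> K) (F : letter -> letter -> V) :
  (forall a b, w b a = - w a b) ->
  \sum_a \sum_b w a b *: F a b = 2^-1 *: \sum_a \sum_b w a b *: (F a b - F b a).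
Proof.
move=> wA.
have -> : \sum_a \sum_b w a b *: (F a b - F b a) =
   \sum_a \sum_b w a b *: F a b - \sum_a \sum_b w a b *: F b a.
  rewrite -sumrB; apply: eq_bigr => a _; rewrite -sumrB; apply: eq_bigr => b _.
  by rewrite scalerBr.
have -> : \sum_a \sum_b w a b *: F b a = - \sum_a \sum_b w a b *: F a b.
  rewrite exchange_big /= -sumrN; apply: eq_bigr => a _; rewrite -sumrN.
  by apply: eq_bigr => b _; rewrite wA scaleNr.
rewrite opprK -mulr2n -scaler_nat scalerA mulVf ?scale1r //.
by rewrite pnatr_eq0.
Qed.
End GenS.

Section GenA.
Variables (K : pzRingType) (A : lalgType K).
Lemma sum_split_mul (w : letter -> letter -> K) (X Y : letter -> letter -> A) (y : A) :
  \sum_a \sum_b w a b *: (X a b * y - Y a b) =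
  (\sum_a \sum_b w a b *: X a b) * y - \sum_a \sum_b w a b *: Y a b.
Proof.
rewrite !mulr_suml -sumrB; apply: eq_bigr => a _.
rewrite !mulr_suml -sumrB; apply: eq_bigr => b _.
by rewrite scalerBr scalerAl.
Qed.
End GenA.

Section Ideal.
Variable R : realType.
Local Notation C := R[i].
Local Notation FA := (FA R).
Local Notation I := (@in_rel_ideal R).

Lemma I0 : I 0.
Proof. exists 0%N, (fun _ => 0), (fun _ => 0), (fun i : 'I_0 => ord0). by rewrite big_ord0. Qed.

Lemma Igen (k : 'I_(size (lie_rels R))) : I (nth 0 (lie_rels R) k).
Proof. by exists 1%N, (fun _ => 1), (fun _ => 1), (fun _ => k); rewrite big_ord1 mul1r mulr1. Qed.

Lemma ID (x y : FA) : I x -> I y -> I (x + y).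
Proof.
move=> [n [a [b [r ->]]]] [m [a' [b' [r' ->]]]].
exists (n + m)%N, (fun i => match split i with inl j => a j | inr j => a' j end),
  (fun i => match split i with inl j => b j | inr j => b' j end),
  (fun i => match split i with inl j => r j | inr j => r' j end).
rewrite big_split_ord; apply: congr2; apply: eq_bigr => i _.
- by rewrite (unsplitK (inl i : 'I_n + 'I_m)).
- by rewrite (unsplitK (inr i : 'I_n + 'I_m)).
Qed.

Lemma IZ (c : C) (x : FA) : I x -> I (c *: x).
Proof.
move=> [n [a [b [r ->]]]]; exists n, (fun i => c *: a i), b, r.
by rewrite scaler_sumr; apply: eq_bigr => i _; rewrite !scalerAl.
Qed.

Lemma IN (x : FA) : I x -> I (- x).
Proof. by move=> h; rewrite -scaleN1r; apply: IZ. Qed.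

Lemma IB (x y : FA) : I x -> I y -> I (x - y).
Proof. by move=> hx hy; apply: ID => //; apply: IN. Qed.

Lemma IMl (y x : FA) : I x -> I (y * x).
Proof.
move=> [n [a [b [r ->]]]]; exists n, (fun i => y * a i), b, r.
by rewrite mulr_sumr; apply: eq_bigr => i _; rewrite !mulrA.
Qed.

Lemma IMr (y x : FA) : I x -> I (x * y).
Proof.
move=> [n [a [b [r ->]]]]; exists n, a, (fun i => b i * y), r.
by rewrite mulr_suml; apply: eq_bigr => i _; rewrite [in RHS]mulrA.
Qed.

Lemma Isum (J : finType) (F : J -> FA) : (forall j, I (F j)) -> I (\sum_j F j).
Proof. move=> h; apply: (big_ind I) => //; [exact: I0 | exact: ID]. Qed.

End Ideal.

Lemma letter_decodeK : cancel letter_decode letter_code.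
Proof.
move=> [[|[|[|[|[|m]]]]] Hi]; apply: val_inj; rewrite /= ?inordK //.
Qed.
Lemma sum_letter (V : nmodType) (F : letter -> V) :
  \sum_(a : letter) F a = F L1 + F L11 + F L2 + F L22 + F L12.
Proof.
rewrite (reindex letter_decode); last first.
  by exists letter_code => x _; [apply: letter_decodeK | apply: letter_codeK].
rewrite !big_ord_recl big_ord0 /=. by rewrite addr0 !addrA.
Qed.

Section Core.
Variable R : realType.
Local Notation C := R[i].
Local Notation FA := (FA R).
Local Notation I := (@in_rel_ideal R).
Local Notation Z := (@Zg R).

Lemma commE (x y : FA) : comm x y = cm x y. Proof. by []. Qed.

Definition op (a : letter) (y : FA) : FA :=
  match a with L1 => comm (Z L1) y | L2 => comm (Z L2) y | _ => Z a * y end.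
Definition isad (a : letter) := match a with L1 | L2 => true | _ => false end.

Lemma opcomm a b (y : FA) : op a (op b y) - op b (op a y) =
  cm (Z a) (Z b) * y - (if isad a && isad b then y * cm (Z a) (Z b) else 0).
Proof.
case: a; case: b; cbv beta iota delta [op isad andb].
1,3,11,13: exact: L_adad'.
1-3,9-11: exact: L_adL'.
1,3,6,8,11,13: exact: L_Lad'.
all: exact: L_LL'.
Qed.

Lemma wedgeA a b (z : C * C) : wedge b a z = - wedge a b z.
Proof. by rewrite /wedge opprB [Defs.coef1 b z * _]mulrC [Defs.coef2 b z * _]mulrC. Qed.

Definition Tt : FA := comm (Z L1 - Z L2) (Z L12).
Definition Qq : FA := comm (Z L2) (Z L12).
Definition tau (a b : letter) : C :=
  match a, b with
  | L11, L22 => -1 | L22, L11 => 1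
  | L11, L12 => 1 | L12, L11 => -1
  | L22, L12 => -1 | L12, L22 => 1
  | L1, L12 => 1 | L12, L1 => -1
  | _, _ => 0 end.
Definition sigma (a b : letter) : C :=
  match a, b with
  | L1, L12 => 1 | L12, L1 => -1
  | L2, L12 => 1 | L12, L2 => -1
  | _, _ => 0 end.
Definition rho a b : FA := comm (Z a) (Z b) - tau a b *: Tt - sigma a b *: Qq.

Lemma nz_facts (z : C * C) : Udom z ->
  [/\ z.1 != 0, 1 - z.1 != 0, z.2 != 0, 1 - z.2 != 0 & 1 - z.1 * z.2 != 0].
Proof. by case=> *; split=> //; rewrite subr_eq0 eq_sym. Qed.

Lemma sum_tau (z : C * C) : Udom z -> \sum_a \sum_b wedge a b z * tau a b = 0.
Proof.
move=> /nz_facts [h1 h2 h3 h4 h5].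
rewrite !sum_letter /tau /wedge /Defs.coef1 /Defs.coef2 /=.
field. by rewrite h1 h2 h3 h4 h5.
Qed.

Lemma sum_sigma (z : C * C) : Udom z -> \sum_a \sum_b wedge a b z * sigma a b = 0.
Proof.
move=> /nz_facts [h1 h2 h3 h4 h5].
rewrite !sum_letter /sigma /wedge /Defs.coef1 /Defs.coef2 /=.
field. by rewrite h1 h2 h3 h4 h5.
Qed.

Lemma rel_k (k : nat) (hk : (k < 6)%N) : I (nth 0 (lie_rels R) k).
Proof. exact: (Igen (Ordinal hk)). Qed.
Lemma r1 : I (comm (Z L1) (Z L2)). Proof. exact: (@rel_k 0 isT). Qed.
Lemma r2 : I (comm (Z L11) (Z L2)). Proof. exact: (@rel_k 1 isT). Qed.
Lemma r3 : I (comm (Z L1) (Z L22)). Proof. exact: (@rel_k 2 isT). Qed.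
Lemma r4 : I (comm (Z L11) (Z L22) + Tt). Proof. exact: (@rel_k 3 isT). Qed.
Lemma r5 : I (comm (Z L11) (Z L12) - Tt). Proof. exact: (@rel_k 4 isT). Qed.
Lemma r6 : I (comm (Z L22) (Z L12) + Tt). Proof. exact: (@rel_k 5 isT). Qed.

Lemma Isym (x y : FA) : I (comm x y) -> I (comm y x).
Proof. by rewrite !commE [cm y x]cmA => h; apply: IN. Qed.
Lemma IsymP (x y t : FA) : I (comm x y + t) -> I (comm y x - t).
Proof. by rewrite !commE [cm y x]cmA -opprD => h; apply: IN. Qed.
Lemma IsymM (x y t : FA) : I (comm x y - t) -> I (comm y x + t).
Proof.
rewrite !commE [cm y x]cmA => h.
have -> : - cm x y + t = - (cm x y - t) by rewrite [RHS]opprB [LHS]addrC.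
by apply: IN.
Qed.

Lemma wedge_aa a (z : C * C) : wedge a a z = 0.
Proof. by rewrite /wedge mulrC subrr. Qed.

Lemma Iw0 (w : C) (x : FA) : w = 0 -> I (w *: x).
Proof. by move=> ->; rewrite scale0r; apply: I0. Qed.

Lemma wz (z : C * C) : [/\ wedge L1 L11 z = 0, wedge L11 L1 z = 0,
   wedge L2 L22 z = 0 & wedge L22 L2 z = 0].
Proof. by split; rewrite /wedge /Defs.coef1 /Defs.coef2 /= !(mul0r, mulr0) subrr. Qed.

Lemma rho_in a b (z : C * C) : I (wedge a b z *: rho a b).
Proof.
have [w1 w2 w3 w4] := wz z.
case: a; case: b; cbv beta iota delta [rho tau sigma].
- by apply: Iw0; apply: wedge_aa.
- by apply: Iw0.
- by apply: IZ; apply: G00; exact: r1.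
- by apply: IZ; apply: G00; exact: r3.
- apply: IZ; apply: G11; first exact: I0.
  by rewrite /Tt /Qq !commE (cmBl (Z L1) (Z L2) (Z L12)) subrK.
- by apply: Iw0.
- by apply: Iw0; apply: wedge_aa.
- by apply: IZ; apply: G00; exact: r2.
- by apply: IZ; apply: GN0; exact: r4.
- by apply: IZ; apply: G10; exact: r5.
- by apply: IZ; apply: G00; apply: Isym; exact: r1.
- by apply: IZ; apply: G00; apply: Isym; exact: r2.
- by apply: Iw0; apply: wedge_aa.
- by apply: Iw0.
- by apply: IZ; apply: G01; first exact: I0.
- by apply: IZ; apply: G00; apply: Isym; exact: r3.
- by apply: IZ; apply: G10; apply: IsymP; exact: r4.
- by apply: Iw0.
- by apply: Iw0; apply: wedge_aa.
- by apply: IZ; apply: GN0; exact: r6.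
- apply: IZ; apply: GNN; first exact: I0.
  by rewrite /Tt /Qq !commE (cmA (Z L12) (Z L1)) (cmBl (Z L1) (Z L2) (Z L12)) subrK.
- by apply: IZ; apply: GN0; apply: IsymM; exact: r5.
- apply: IZ; apply: G0N; first exact: I0.
  by rewrite /Qq !commE (cmA (Z L12) (Z L2)).
- by apply: IZ; apply: G10; apply: IsymP; exact: r6.
- by apply: Iw0; apply: wedge_aa.
Qed.

Lemma omega2 (z : C * C) : Udom z ->
  I (\sum_a \sum_b wedge a b z *: cm (Z a) (Z b)).
Proof.
move=> hz.
rewrite (@sum_decomp _ _ (fun a b => cm (Z a) (Z b)) rho (fun a b => wedge a b z) tau sigma Tt Qq).
- by apply: Isum => a; apply: Isum => b; apply: rho_in.
- move=> a b; exact: decomp.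
- exact: sum_sigma.
- exact: sum_tau.
Qed.

Lemma ad_in (w : C) a b (y : FA) :
  I (w *: (if isad a && isad b then y * cm (Z a) (Z b) else 0)).
Proof.
apply: IZ.
case: a; case: b; cbv beta iota delta [isad andb].
1,13: by rewrite cmxx mulr0; exact: I0.
2: by apply: IMl; exact: r1.
9: by apply: IMl; apply: Isym; exact: r1.
all: exact: I0.
Qed.

Lemma core_op (z : C * C) (y : FA) : Udom z ->
  I (\sum_a \sum_b wedge a b z *: op a (op b y)).
Proof.
move=> hz.
rewrite (@sym_sum _ _ (fun a b => wedge a b z) (fun a b => op a (op b y))); last first.
  by move=> a b; apply: wedgeA.
apply: IZ.
have -> : \sum_a \sum_b wedge a b z *: (op a (op b y) - op b (op a y)) =
  \sum_a \sum_b wedge a b z *: (cm (Z a) (Z b) * y -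
     (if isad a && isad b then y * cm (Z a) (Z b) else 0)).
  apply: eq_bigr => a _; apply: eq_bigr => b _; by rewrite opcomm.
rewrite sum_split_mul; apply: IB.
  by apply: IMr; apply: omega2.
by apply: Isum => a; apply: Isum => b; apply: ad_in.
Qed.
End Core.

Section LinAlg.
Variables (F : fieldType) (V : lmodType F) (P : V -> Prop).
Hypothesis P0 : P 0.
Hypothesis PD : forall x y, P x -> P y -> P (x + y).
Hypothesis PZ : forall (c : F) x, P x -> P (c *: x).
Variables (N : nat) (g : 'I_N -> V).

Definition Phi (c : 'rV[F]_N) : V := \sum_i c 0 i *: g i.
Definition Kp c := P (Phi c).

Lemma Psum (J : finType) (G : J -> V) : (forall j, P (G j)) -> P (\sum_j G j).
Proof. by move=> h; apply: (big_ind P). Qed.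

Lemma PhiD c d : Phi (c + d) = Phi c + Phi d.
Proof. by rewrite /Phi -big_split; apply: eq_bigr => i _; rewrite mxE scalerDl. Qed.
Lemma PhiZ (a : F) c : Phi (a *: c) = a *: Phi c.
Proof. by rewrite /Phi scaler_sumr; apply: eq_bigr => i _; rewrite mxE scalerA. Qed.
Lemma PhiN c : Phi (- c) = - Phi c.
Proof. by rewrite -[- c]scaleN1r PhiZ scaleN1r. Qed.
Lemma PhiB c d : Phi (c - d) = Phi c - Phi d.
Proof. by rewrite PhiD PhiN. Qed.
Lemma Phi0 : Phi 0 = 0.
Proof. by rewrite /Phi big1 // => i _; rewrite mxE scale0r. Qed.
Lemma PhiSum (J : finType) (G : J -> 'rV_N) : Phi (\sum_j G j) = \sum_j Phi (G j).
Proof. by apply: (big_morph Phi PhiD Phi0). Qed.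

Lemma Kp_mul m (B : 'M_(m, N)) (w : 'rV_m) :
  (forall r, Kp (row r B)) -> Kp (w *m B).
Proof.
move=> hB; rewrite /Kp mulmx_sum_row PhiSum; apply: Psum => r.
by rewrite PhiZ; apply: PZ; apply: hB.
Qed.

Lemma Kp_sub m (B : 'M_(m, N)) (c : 'rV_N) :
  (forall r, Kp (row r B)) -> (c <= B)%MS -> Kp c.
Proof. by move=> hB /submxP [w ->]; apply: Kp_mul. Qed.

Lemma exM : exists M : 'M[F]_N,
  (forall r, Kp (row r M)) /\ (forall c, Kp c -> (c <= M)%MS).
Proof.
suff H : forall k, exists M : 'M[F]_N, (forall r, Kp (row r M)) /\
   ((k <= \rank M)%N \/ forall c, Kp c -> (c <= M)%MS).
  have [M [h1 [h2|h2]]] := H N.+1; last by exists M.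
  by have := rank_leq_row M; rewrite leqNgt h2.
elim => [|k [M [hM hk]]].
  exists 0; split; last by left.
  by move=> r; rewrite /Kp row0 Phi0.
case: hk => [hk | hall]; last by exists M; split=> //; right.
case: (classic (forall c, Kp c -> (c <= M)%MS)) => [hall | hn].
  by exists M; split=> //; right.
have [c [hc hcM]] : exists c, Kp c /\ ~~ (c <= M)%MS.
  apply: NNPP => hne; apply: hn => c hc; apply: NNPP => hcm.
  by apply: hne; exists c; split=> //; apply/negP.
exists (M + c)%MS; split.
  move=> r; have /sub_addsmxP [[u1 u2] /= ->] := row_sub r (M + c)%MS.
  rewrite /Kp PhiD; apply: PD; first by apply: (Kp_sub hM); apply: submxMl.
  apply: (Kp_sub (B := c)); last exact: submxMl.
  by move=> r'; rewrite [row r' c](_ : _ = c) //; apply/rowP => j; rewrite !mxE ord1.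
left; apply: (leq_ltn_trans hk).
rewrite (ltn_leqif (mxrank_leqif_sup (addsmxSl M c))).
apply: contra hcM => h; exact: submx_trans (addsmxSr M c) h.
Qed.

Lemma linalg (A : Type) (Pa : A -> Prop) (phi : A -> 'I_N -> F) :
  (forall al, Pa al -> P (\sum_i phi al i *: g i)) ->
  exists v : 'I_N -> 'I_N -> F,
    (forall k al, Pa al -> \sum_i phi al i * v k i = 0) /\
    (forall i, P (g i - \sum_k v k i *: g k)).
Proof.
move=> hphi.
have [M [hM hK]] := exM.
pose Q := proj_mx (M^C)%MS M.
have cap0 : (M^C :&: M)%MS = 0 by rewrite capmxC capmx_compl.
exists (fun k i => Q i k); split.
  move=> k al hal.
  have hle : (\row_i phi al i <= M)%MS.
    apply: hK; rewrite /Kp /Phi.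
    rewrite (eq_bigr (fun i => phi al i *: g i)); first exact: hphi.
    by move=> i _; rewrite mxE.
  have := proj_mx_0 cap0 hle; move/(congr1 (fun m : 'rV[F]_N => m 0 k)).
  rewrite !mxE => h.
  rewrite -[RHS]h; apply: eq_bigr => i _; congr (_ * _); by rewrite mxE.
move=> i.
pose d : 'rV[F]_N := delta_mx 0 i.
have hd : (d <= M^C + M)%MS by apply: submx_full; rewrite addsmxC addsmx_compl_full.
have := Kp_sub hM (proj_mx_compl_sub hd).
rewrite /Kp PhiB.
have -> : Phi d = g i.
  rewrite /Phi (bigD1 i) //= big1 ?addr0; first by rewrite mxE !eqxx scale1r.
  by move=> j hj; rewrite mxE (negbTE hj) andbF scale0r.
have -> : Phi (d *m Q) = \sum_k Q i k *: g k.
  rewrite /Phi; apply: eq_bigr => k _; congr (_ *: _).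
  by rewrite -rowE mxE.
by [].
Qed.
End LinAlg.

Lemma sum_tuple_cons (V : nmodType) n (G : (n.+1).-tuple letter -> V) :
  \sum_t G t = \sum_a \sum_(t : n.-tuple letter) G [tuple of a :: t].
Proof.
rewrite pair_big /=.
rewrite (reindex (fun p : letter * n.-tuple letter => [tuple of p.1 :: p.2])) //.
exists (fun t => (thead t, [tuple of behead t])).
  move=> [a t] _ /=; rewrite theadE; congr pair; exact: val_inj.
move=> t _; apply: val_inj => /=.
by case: t => [[|a s] hs].
Qed.

Section GenR.
Variables (K : comPzRingType) (V : lmodType K).
Lemma restruct0 (J : finType) (w : letter -> letter -> K) (P : J -> K)
  (H : letter -> letter -> J -> V) :
  \sum_a \sum_b \sum_t (w a b * P t) *: H a b t =
  \sum_t P t *: \sum_a \sum_b w a b *: H a b t.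
Proof.
under eq_bigr => a _ do rewrite exchange_big.
rewrite exchange_big; apply: eq_bigr => t _.
rewrite scaler_sumr; apply: eq_bigr => a _.
rewrite scaler_sumr; apply: eq_bigr => b _.
by rewrite scalerA mulrC.
Qed.
End GenR.

Section Main.
Variable R : realType.
Local Notation C := R[i].
Local Notation FA := (FA R).
Local Notation I := (@in_rel_ideal R).
Local Notation Z := (@Zg R).
Local Notation G s := (iter s (@Dop R) (@one_tens R)).

Lemma mform_S s a (t : word) j (x : nat -> C * C) e :
  mform s.+2 (a :: t) j.+1 x e =
  Defs.comp a (e 0%N) (x 0%N) * mform s.+1 t j (fun k => x k.+1) (fun k => e k.+1).
Proof.
by rewrite /mform /= big_ord_recl.
Qed.

Lemma mform_0 s a b (t : word) (x : nat -> C * C) e :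
  mform s.+2 (a :: b :: t) 0 x e =
  wedge a b (x 0%N) * \prod_(k < s) Defs.comp (nth L1 t k) (e k.+1) (x k.+1).
Proof.
by rewrite /mform /= big_ord_recl.
Qed.

Lemma mul_Cmalg (c : C) (x : FA) : x * c%:MP = c *: x.
Proof.
rewrite malgM_def malgZ_def fgmulgU; apply: eq_bigr => k _.
by rewrite mulm1 mulrC.
Qed.

Lemma FA_scalerAr (c : C) (x y : FA) : x * (c *: y) = c *: (x * y).
Proof. by rewrite -mul_malgC mulrA mul_Cmalg scalerAl. Qed.

Lemma op0 a : op a (0 : FA) = 0.
Proof. by case: a; rewrite /op ?commE /cm ?mulr0 ?mul0r ?subrr. Qed.

Lemma opD a (y1 y2 : FA) : op a (y1 + y2) = op a y1 + op a y2.
Proof.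
case: a; rewrite /op ?commE /cm ?mulrDr //.
- by rewrite mulrDl opprD addrACA.
- by rewrite mulrDl opprD addrACA.
Qed.

Lemma opZ a (c : C) (y : FA) : op a (c *: y) = c *: op a y.
Proof.
case: a; rewrite /op ?commE /cm ?FA_scalerAr //.
- by rewrite -scalerAl scalerBr.
- by rewrite -scalerAl scalerBr.
Qed.

Lemma op_sum a (J : finType) (F : J -> FA) : op a (\sum_j F j) = \sum_j op a (F j).
Proof. exact: (big_morph (op a) (opD a) (op0 a)). Qed.

Lemma opI a (y : FA) : I y -> I (op a y).
Proof.
move=> h; case: a; rewrite /op ?commE /cm; try by apply: IMl.
- by apply: IB; [apply: IMl | apply: IMr].
- by apply: IB; [apply: IMl | apply: IMr].
Qed.

Lemma gS s a (w : word) : G s.+1 (a :: w) = op a (G s w).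
Proof. by case: a. Qed.

Lemma g_homog s (w : word) : size w != s -> G s w = 0.
Proof.
elim: s w => [|s IH] [|a w] // hw.
by rewrite gS IH ?op0.
Qed.

Lemma g_nil s : G s [::] = (if s is 0 then 1 else 0).
Proof. by case: s. Qed.

Lemma g_ends s (w : word) : ends_in_zeta1_or_zeta2 w -> G s w = 0.
Proof.
elim: s w => [|s IH] [|a w] // hw.
rewrite gS.
case: w hw => [|b w] hw.
  rewrite g_nil /=.
  have {hw} : a = L1 \/ a = L2.
    by move: hw; rewrite /= => /orP [] /eqP ->; [left|right].
  case=> ->; case: s {IH}; rewrite /op ?commE /cm ?mulr1 ?mul1r ?mulr0 ?mul0r subrr //.
by rewrite IH ?op0.
Qed.

Lemma restructS (J : finType) (c : letter -> C) (m : J -> C) (H : J -> FA) :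
  \sum_a \sum_t (c a * m t) *: op a (H t) = \sum_a c a *: op a (\sum_t m t *: H t).
Proof.
apply: eq_bigr => a _; rewrite op_sum scaler_sumr; apply: eq_bigr => t _.
by rewrite opZ scalerA.
Qed.

Lemma chen_g s j (x : nat -> C * C) e : (j.+1 < s)%N -> (forall k, Udom (x k)) ->
  I (\sum_(t : s.-tuple letter) mform s t j x e *: G s t).
Proof.
elim: s j x e => [|s IH] j x e hj hx //.
case: s IH hj => [|s] IH hj; first by case: j hj.
rewrite sum_tuple_cons.
case: j hj => [|j] hj.
  under eq_bigr => a _ do rewrite sum_tuple_cons.
  have E : forall a b (t : s.-tuple letter),
    mform s.+2 [tuple of a :: [tuple of b :: t]] 0 x e *:
      G s.+2 [tuple of a :: [tuple of b :: t]] =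
    (wedge a b (x 0%N) * \prod_(k < s) Defs.comp (nth L1 t k) (e k.+1) (x k.+1))
      *: op a (op b (G s t)).
    by move=> a b t; rewrite mform_0 !gS.
  under eq_bigr => a _ do under eq_bigr => b _ do under eq_bigr => t _ do rewrite E.
  rewrite restruct0; apply: Isum => t; apply: IZ; exact: core_op.
have E : forall a (t : s.+1.-tuple letter),
  mform s.+2 [tuple of a :: t] j.+1 x e *: G s.+2 [tuple of a :: t] =
  (Defs.comp a (e 0%N) (x 0%N) * mform s.+1 t j (fun k => x k.+1) (fun k => e k.+1))
    *: op a (G s.+1 t).
  by move=> a t; rewrite mform_S gS.
under eq_bigr => a _ do under eq_bigr => t _ do rewrite E.
rewrite restructS; apply: Isum => a; apply: IZ; apply: opI.
by apply: IH => // k.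
Qed.
End Main.

Theorem proposition6p2 (R : realType) (s : nat) :
  in_B0_tens (iter s (@Dop R) (@one_tens R)).
Proof.
pose N := #|{: s.-tuple letter}|.
pose ev : 'I_N -> s.-tuple letter := enum_val.
pose er : s.-tuple letter -> 'I_N := enum_rank.
have evK : cancel ev er by exact: enum_valK.
have erK : cancel er ev by exact: enum_rankK.
pose g (i : 'I_N) : FA R := iter s (@Dop R) (@one_tens R) (ev i).
pose A := ((nat * (nat -> R[i] * R[i]) * (nat -> bool)) + s.-tuple letter)%type.
pose Pa (al : A) : Prop := match al with
  | inl (j, x, e) => (j.+1 < s)%N /\ (forall k, Udom (x k))
  | inr t => ends_in_zeta1_or_zeta2 t end.
pose phi (al : A) (i : 'I_N) : R[i] := match al with
  | inl (j, x, e) => mform s (ev i) j x e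
  | inr t => (ev i == t)%:R end.
have hphi : forall al, Pa al -> in_rel_ideal (\sum_i phi al i *: g i).
  case => [[[j x] e] [hj hx] | t ht].
    have := @chen_g R s j x e hj hx.
    rewrite (reindex ev) //; exists er => i _; [exact: evK | exact: erK].
  rewrite big1; first exact: I0.
  move=> i _; rewrite /phi /g; case: eqP => [-> | _].
    by rewrite g_ends // scaler0.
  by rewrite scale0r.
have [v [hv1 hv2]] := linalg (@I0 R) (@ID R) (@IZ R) hphi.
pose vv (k : 'I_N) (w : word) : R[i] :=
  if insub w is Some t then v k (er t) else 0.
exists N, vv, g; split.
  move=> k; split.
    exists 1%N, (fun _ => s), (fun _ => vv k); split; last first.
      by move=> w; rewrite big_ord1.
    move=> _; split.
      by move=> w; rewrite /vv; case: insubP => [t _ <- _ | _]; [rewrite size_tuple | rewrite eqxx].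
    move=> j hj x e hx.
    have := hv1 k (inl (j, x, e)) (conj hj hx).
    rewrite /phi => h.
    have -> : \sum_(t : s.-tuple letter) vv k t * mform s t j x e =
              \sum_(t : s.-tuple letter) v k (er t) * mform s t j x e.
      by apply: eq_bigr => t _; rewrite /vv valK.
    rewrite (reindex ev) /=; last by exists er => i _; [exact: evK | exact: erK].
    rewrite -[RHS]h; apply: eq_bigr => i _; by rewrite evK mulrC.
  move=> w; rewrite /vv; case: insubP => [t _ <- | _]; last by rewrite eqxx.
  move=> hw; apply/negP => he.
  have := hv1 k (inr t) he; rewrite /phi.
  rewrite (bigD1 (er t)) //= erK eqxx mul1r big1 ?addr0.
    by move=> h; move: hw; rewrite h eqxx.
  move=> i hi; case: eqP => [e | _]; last by rewrite mul0r.
  by move: hi; rewrite -e evK eqxx.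
move=> w; rewrite /ueq /vv; case: insubP => [t _ <- | hn].
  have := hv2 (er t); rewrite /g erK; exact.
have -> : \sum_(k < N) 0 *: g k = 0 by apply: big1 => k _; exact: scale0r.
rewrite g_homog //; rewrite subrr; exact: I0.
Qed.
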